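(* Let $p,q\in\mathbb{C}$ and consider the system of difference equations ($m\mathcal{H}1$) $$u_2=v+t\frac{p-q}{s-t},\qquad v_1=u+s\frac{p-q}{s-t},\qquad s_2=\frac{1}{t}+\frac{p-q}{t(u-v)},\qquad t_1=\frac{1}{s}+\frac{p-q}{s(u-v)}.$$ Then: (1) the system implies $\dfrac{s_2}{t_1}=\dfrac{s}{t}$ and $u_2-v_1+\dfrac{p-q}{2}=-\Big(u-v+\dfrac{p-q}{2}\Big)$; (2) for solutions of the system, $tu=sv$ holds if and only if $u_2s_2=t_1v_1$ holds; (3) the system extends to multi-dimensions as $$X^i_j=X^j+Y^j\frac{p^i-p^j}{Y^i-Y^j},\qquad Y^i_j=\frac{1}{Y^j}+\frac{1}{Y^j}\,\frac{p^i-p^j}{X^i-X^j},\qquad i\neq j\in\{1,\dots,n\},$$ and this extended system is multi-dimensionally compatible, i.e. $X^i_{jk}=X^i_{kj}$ and $Y^i_{jk}=Y^i_{kj}$ for all pairwise distinct $i,j,k$; (4) the system arises as the compatibility condition $$L(u_2,s_2;p,\lambda)\,L(v,t;q,\lambda)=L(v_1,t_1;q,\lambda)\,L(u,s;p,\lambda)\quad(\text{for all }\lambda)$$ of the linear system $\Psi_1=L(u,s;p,\lambda)\Psi$, $\Psi_2=L(v,t;q,\lambda)\Psi$, where $$L(u,s;p,\lambda)=\begin{pmatrix}0&0&-u&s(u+p-\lambda)\\0&0&-1&s\\-1&u+p-\lambda&0&0\\-s&su&0&0\end{pmatrix};$$ (5) the companion map $\phi^c:(u,s,v_1,t_1)\mapsto(u_2,s_2,v,t)$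 is a Yang–Baxter map.
   Context: Setting on the $\mathbb{Z}^2$ graph: $u,s$ are complex functions on horizontal edges $\{(m,n),(m+1,n)\}$ and $v,t$ on vertical edges $\{(m,n),(m,n+1)\}$ (each edge labelled by its initial vertex). For an elementary square with lower-left vertex $(m,n)$, $u,s$ are the values on its bottom edge, $v,t$ on its left edge, $u_2,s_2$ on its top edge and $v_1,t_1$ on its right edge; $p$ depends only on $m$ and $q$ only on $n$. In the multi-component notation, $X^i,Y^i$ are functions on the edges of $\mathbb{Z}^n$ parallel to the $i$-th coordinate direction, $p^i$ is a parameter attached to direction $i$ (depending only on the $i$-th coordinate), a subscript $j$ denotes the unit shift in direction $j$, and $X^1=u,Y^1=s,X^2=v,Y^2=t,p^1=p,p^2=q$. Multi-dimensional compatibility means that computing $X^i_{jk},Y^i_{jk}$ from the system by shifting first in direction $j$ then in direction $k$ gives identically the same rational expressions as shifting first in $k$ then in $j$. The system defines (for fixed $p,q$) a map $\phi:(u,s,v,t)\mapsto(u_2,s_2,v_1,t_1)$; its companion map is $\phi^c:(u,s,v_1,t_1)\mapsto(u_2,s_2,v,t)$, obtained by solving the system for $(u_2,s_2,v,t)$. A map $R:(x_i,y_i,\alpha_i;x_j,y_j,\alpha_j)\mapsto(x_i',y_i',\alpha_i;x_j',y_j',\alpha_j)$ (parameters $\alpha$ carried along unchanged) is a Yang–Baxter map if $R_{12}R_{13}R_{23}=R_{23}R_{13}R_{12}$ as maps on triples, where $R_{ij}$ acts as $R$ on the $i$-th and $j$-th factors and as identity on the remaining one. *)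

(* Defs.v *)
(* Scalars: an arbitrary numClosedFieldType C (a model of
   the complex numbers, e.g. complex R for R : rcfType, or algC). *)
From mathcomp Require Import all_boot all_order all_algebra.
Set Implicit Arguments. Unset Strict Implicit. Unset Printing Implicit Defensive.
Import GRing.Theory Num.Theory.
Local Open Scope ring_scope.

Section MH1.
Variable C : numClosedFieldType.

(* u,s : bottom edge; v,t : left edge; u2,s2 : top edge; v1,t1 : right edge *)
Definition mH1_u2 (p q u s v t : C) : C := v + t * ((p - q) / (s - t)).
Definition mH1_v1 (p q u s v t : C) : C := u + s * ((p - q) / (s - t)).
Definition mH1_s2 (p q u s v t : C) : C := t^-1 + (p - q) / (t * (u - v)).
Definition mH1_t1 (p q u s v t : C) : C := s^-1 + (p - q) / (s * (u - v)).

Definition mH1 (p q u s v t u2 s2 v1 t1 : C) : Prop :=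
  [/\ u2 = mH1_u2 p q u s v t, s2 = mH1_s2 p q u s v t,
      v1 = mH1_v1 p q u s v t & t1 = mH1_t1 p q u s v t].

Definition mH1_nondeg (u s v t : C) : Prop :=
  [/\ s != 0, t != 0, s - t != 0 & u - v != 0].

(* X i = X^i, Y i = Y^i, P i = p^i at a vertex of Z^n *)
Definition Xstep n (P X Y : 'I_n -> C) (i j : 'I_n) : C :=
  X j + Y j * ((P i - P j) / (Y i - Y j)).
Definition Ystep n (P X Y : 'I_n -> C) (i j : 'I_n) : C :=
  (Y j)^-1 + (Y j)^-1 * ((P i - P j) / (X i - X j)).

(* the fields shifted in direction d (meaningful on components i != d) *)
Definition shiftX n (P X Y : 'I_n -> C) (d : 'I_n) : 'I_n -> C :=
  fun i => Xstep P X Y i d.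
Definition shiftY n (P X Y : 'I_n -> C) (d : 'I_n) : 'I_n -> C :=
  fun i => Ystep P X Y i d.

Definition step_ok n (X Y : 'I_n -> C) (a b : 'I_n) : Prop :=
  [/\ Y a - Y b != 0, Y b != 0 & X a - X b != 0].

Definition Lmat (u s p lam : C) : 'M[C]_4 :=
  \matrix_(i < 4, j < 4)
    nth 0 (nth [::] [:: [:: 0; 0; - u; s * (u + p - lam)];
                        [:: 0; 0; -1; s];
                        [:: -1; u + p - lam; 0; 0];
                        [:: - s; s * u; 0; 0]] i) j.

Definition pt := (C * C * C)%type.

(* phi^c : (u,s ; v1,t1) |-> (u2,s2 ; v,t), first factor carrying p,
   second factor carrying q; obtained by solving (mH1) for (u2,s2,v,t) *)
Definition Rc (a b : pt) : pt * pt :=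
  let: (u, s, p) := a in let: (v1, t1, q) := b in
  ((v1 - (p - q) * (s * t1) / (s * t1 - 1),
    t1 * (v1 - u) / (v1 - u - (p - q)), p),
   (u - (p - q) / (s * t1 - 1),
    s * (v1 - u - (p - q)) / (v1 - u), q)).

Definition Rc_def (a b : pt) : Prop :=
  let: (u, s, p) := a in let: (v1, t1, q) := b in
  [/\ s * t1 - 1 != 0, v1 - u != 0 & v1 - u - (p - q) != 0].

Definition R12 (w : pt * pt * pt) : pt * pt * pt :=
  let: (a, b, c) := w in let: (a', b') := Rc a b in (a', b', c).
Definition R13 (w : pt * pt * pt) : pt * pt * pt :=
  let: (a, b, c) := w in let: (a', c') := Rc a c in (a', b, c').
Definition R23 (w : pt * pt * pt) : pt * pt * pt :=
  let: (a, b, c) := w in let: (b', c') := Rc b c in (a, b', c').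

Definition R12_def (w : pt * pt * pt) : Prop := let: (a, b, c) := w in Rc_def a b.
Definition R13_def (w : pt * pt * pt) : Prop := let: (a, b, c) := w in Rc_def a c.
Definition R23_def (w : pt * pt * pt) : Prop := let: (a, b, c) := w in Rc_def b c.

End MH1.

(* Main.v *)
Require Import Defs.
From mathcomp Require Import all_boot all_order all_algebra.
From mathcomp Require Import ring.
Import GRing.Theory Num.Theory.
Local Open Scope ring_scope.

Lemma nz_of (C : fieldType) (E P D : C) : E != 0 -> D != 0 -> E * D = P -> P != 0.
Proof. by move=> hE hD <-; rewrite mulf_neq0. Qed.
Lemma nz_eq (C : fieldType) (P Q : C) : Q != 0 -> P = Q -> P != 0.
Proof. by move=> h ->. Qed.
Ltac fs := field; repeat (apply/andP; split); assumption.

Lemma part1 (C : numClosedFieldType) (p q u s v t u2 s2 v1 t1 : C) :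
     mH1_nondeg u s v t -> mH1 p q u s v t u2 s2 v1 t1 -> t1 != 0 ->
     s2 / t1 = s / t /\
     u2 - v1 + (p - q) / 2%:R = - (u - v + (p - q) / 2%:R).
Proof.
case=> hs ht hst huv [-> -> -> ->]; rewrite /mH1_t1 /mH1_s2 /mH1_u2 /mH1_v1 => ht1.
have hF : u - v + (p - q) != 0.
  apply: (@nz_of _ _ _ (s * (u - v)) ht1); first by rewrite mulf_neq0.
  by fs.
split; first by fs.
by fs.
Qed.

Lemma part2 (C : numClosedFieldType) (p q u s v t u2 s2 v1 t1 : C) :
     mH1_nondeg u s v t -> mH1 p q u s v t u2 s2 v1 t1 -> t1 != 0 ->
     (t * u = s * v <-> u2 * s2 = t1 * v1).
Proof.
case=> hs ht hst huv [-> -> -> ->]; rewrite /mH1_t1 /mH1_s2 /mH1_u2 /mH1_v1 => ht1.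
have hF : u - v + (p - q) != 0.
  apply: (@nz_of _ _ _ (s * (u - v)) ht1); first by rewrite mulf_neq0.
  by fs.
have key : (v + t * ((p - q) / (s - t))) * (t^-1 + (p - q) / (t * (u - v))) -
   (s^-1 + (p - q) / (s * (u - v))) * (u + s * ((p - q) / (s - t)))
   = (s * v - t * u) * ((u - v + (p - q)) / (s * t * (u - v))) by fs.
have hK : (u - v + (p - q)) / (s * t * (u - v)) != 0.
  by rewrite mulf_neq0 // invr_eq0 !mulf_neq0.
split => [E|E].
  by apply/eqP; rewrite -subr_eq0 key E subrr mul0r.
move/eqP: E; rewrite -subr_eq0 key mulf_eq0 (negbTE hK) orbF subr_eq0 => /eqP ->.
by [].
Qed.

Lemma part3a (C : numClosedFieldType) (p q u s v t : C) :
     let P := [ffun i : 'I_2 => if i == ord0 then p else q] in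
     let X := [ffun i : 'I_2 => if i == ord0 then u else v] in
     let Y := [ffun i : 'I_2 => if i == ord0 then s else t] in
     mH1 p q u s v t (Xstep P X Y ord0 ord_max) (Ystep P X Y ord0 ord_max)
                     (Xstep P X Y ord_max ord0) (Ystep P X Y ord_max ord0).
Proof.
move=> P X Y; rewrite /P /X /Y /Xstep /Ystep /mH1 /mH1_u2 /mH1_s2 /mH1_v1 /mH1_t1 !ffunE /=.
split.
- by [].
- by rewrite invfM mulrCA.
- by rewrite -opprB -[t - s]opprB invrN mulrNN.
- by rewrite -opprB -[v - u]opprB invrN mulrNN invfM mulrCA.
Qed.

Lemma part3b (C : numClosedFieldType) : 
  (forall (n : nat) (P X Y : 'I_n -> C) (i j k : 'I_n),
     i != j -> j != k -> i != k ->
     step_ok X Y i k -> step_ok X Y j k ->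
     step_ok (shiftX P X Y k) (shiftY P X Y k) i j ->
     step_ok X Y i j -> step_ok X Y k j ->
     step_ok (shiftX P X Y j) (shiftY P X Y j) i k ->
     Xstep P (shiftX P X Y k) (shiftY P X Y k) i j
       = Xstep P (shiftX P X Y j) (shiftY P X Y j) i k /\
     Ystep P (shiftX P X Y k) (shiftY P X Y k) i j
       = Ystep P (shiftX P X Y j) (shiftY P X Y j) i k).
Proof.
move=> n P X Y i j k _ _ _.
rewrite /step_ok /shiftX /shiftY /Xstep /Ystep.
move: (P i) (P j) (P k) (X i) (X j) (X k) (Y i) (Y j) (Y k) => a b c xi xj xk yi yj yk.
move=> [h1 h2 h3] [h4 h5 h6] [h7 h8 h9] [k1 k2 k3] [k4 k5 k6] [k7 k8 k9].
have n0 : (xi - xj + (a - b)) * (xk - xj) + - (xk - xj + (c - b)) * (xi - xj) != 0.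
  apply: (@nz_of _ _ _ (yj * ((xi - xj) * (xk - xj))) k7); first by rewrite ?mulf_neq0.
  by fs.
have n1 : (xi - xk + (a - c)) * (xj - xk) + - (xj - xk + (b - c)) * (xi - xk) != 0.
  apply: (@nz_of _ _ _ (yk * ((xi - xk) * (xj - xk))) h7); first by rewrite ?mulf_neq0.
  by fs.
have n2 : (xj * (yi - yj) + yj * (a - b)) * (yk - yj) + - (xj * (yk - yj) + yj * (c - b)) * (yi - yj) != 0.
  apply: (@nz_of _ _ _ ((yi - yj) * (yk - yj)) k9); first by rewrite ?mulf_neq0.
  by fs.
have n3 : (xk * (yi - yk) + yk * (a - c)) * (yj - yk) + - (xk * (yj - yk) + yk * (b - c)) * (yi - yk) != 0.
  apply: (@nz_of _ _ _ ((yi - yk) * (yj - yk)) h9); first by rewrite ?mulf_neq0.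
  by fs.
have n4 : xk - xj + (c - b) != 0.
  apply: (@nz_of _ _ _ (yj * (xk - xj)) k8); first by rewrite ?mulf_neq0.
  by fs.
have n5 : xj - xk + (b - c) != 0.
  apply: (@nz_of _ _ _ (yk * (xj - xk)) h8); first by rewrite ?mulf_neq0.
  by fs.
split; fs.
Qed.

Lemma eq_via (C : fieldType) (a b N D : C) : D != 0 -> a - b = N / D -> N = 0 -> a = b.
Proof. by move=> _ E N0; apply/eqP; rewrite -subr_eq0 E N0 mul0r. Qed.

Lemma comb5 (C : fieldType) (L1 R1 L2 R2 L3 R3 L4 R4 L5 R5 c1 c2 c3 c4 c5 N : C) :
  L1 = R1 -> L2 = R2 -> L3 = R3 -> L4 = R4 -> L5 = R5 ->
  N = c1 * (L1 - R1) + c2 * (L2 - R2) + c3 * (L3 - R3) + c4 * (L4 - R4) + c5 * (L5 - R5) ->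
  N = 0.
Proof. by move=> -> -> -> -> -> ->; rewrite !subrr !mulr0 !addr0. Qed.

Lemma part4 (C : numClosedFieldType) (p q u s v t u2 s2 v1 t1 : C) :
     mH1_nondeg u s v t ->
     ((forall lam : C,
         Lmat u2 s2 p lam *m Lmat v t q lam = Lmat v1 t1 q lam *m Lmat u s p lam)
      <-> mH1 p q u s v t u2 s2 v1 t1).
Proof.
case=> hs ht hst huv; split; last first.
  case=> -> -> -> -> lam; apply/matrixP => i j.
  rewrite !mxE !big_ord_recr !big_ord0 /= !mxE.
  rewrite /mH1_u2 /mH1_s2 /mH1_v1 /mH1_t1.
  case: i => [[|[|[|[|i]]]] Hi] //; case: j => [[|[|[|[|j]]]] Hj] //=; fs.
move=> H.
pose o0 := @Ordinal 4 0 erefl. pose o1 := @Ordinal 4 1 erefl.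
pose o2 := @Ordinal 4 2 erefl. pose o3 := @Ordinal 4 3 erefl.
have E1 := congr1 (fun M : 'M[C]_4 => M o2 o2) (H 0).
have E2 := congr1 (fun M : 'M[C]_4 => M o2 o3) (H 0).
have E3 := congr1 (fun M : 'M[C]_4 => M o1 o0) (H 0).
have E4 := congr1 (fun M : 'M[C]_4 => M o0 o1) (H 0).
have E5 := congr1 (fun M : 'M[C]_4 => M o0 o1) (H 1).
move: E1 E2 E3 E4 E5.
rewrite !mxE !big_ord_recr !big_ord0 /= !mxE /= => E1 E2 E3 E4 E5.
rewrite /mH1 /mH1_u2 /mH1_s2 /mH1_v1 /mH1_t1.
split.
- apply: (@eq_via _ _ _ ((s - t) * (u2 - v) - t * (p - q)) _ hst); first by fs.
  apply: (@comb5 _ _ _ _ _ _ _ _ _ _ _ (-s) (-1) 0 0 0 _ E1 E2 E3 E4 E5); ring.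
- apply: (@eq_via _ _ _ (s2 * t * (u - v) - (u - v) - (p - q)) _ (mulf_neq0 ht huv)); first by fs.
  apply: (@comb5 _ _ _ _ _ _ _ _ _ _ _ 1 0 (-u) (-1) 1 _ E1 E2 E3 E4 E5); ring.
- apply: (@eq_via _ _ _ ((s - t) * (v1 - u) - s * (p - q)) _ hst); first by fs.
  apply: (@comb5 _ _ _ _ _ _ _ _ _ _ _ (-t) (-1) 0 0 0 _ E1 E2 E3 E4 E5); ring.
- apply: (@eq_via _ _ _ (t1 * s * (u - v) - (u - v) - (p - q)) _ (mulf_neq0 hs huv)); first by fs.
  apply: (@comb5 _ _ _ _ _ _ _ _ _ _ _ 1 0 (-v) (-1) 1 _ E1 E2 E3 E4 E5); ring.
Qed.

Lemma part5a (C : numClosedFieldType) (p q u s v1 t1 : C) :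
     p != q -> s != 0 -> Rc_def (u, s, p) (v1, t1, q) ->
     let: ((u2, s2, _), (v, t, _)) := Rc (u, s, p) (v1, t1, q) in
     mH1_nondeg u s v t /\ mH1 p q u s v t u2 s2 v1 t1.
Proof.
move=> hpq hs [h1 h2 h3]; rewrite /=.
have hd : p - q != 0 by rewrite subr_eq0.
have ht : s * (v1 - u - (p - q)) / (v1 - u) != 0 by rewrite !mulf_neq0 // invr_eq0.
have hst : s - s * (v1 - u - (p - q)) / (v1 - u) != 0.
  by apply: (@nz_eq _ _ (s * (p - q) / (v1 - u))); [rewrite !mulf_neq0 // invr_eq0 | fs].
have huv : u - (u - (p - q) / (s * t1 - 1)) != 0.
  by apply: (@nz_eq _ _ ((p - q) / (s * t1 - 1))); [rewrite !mulf_neq0 // invr_eq0 | fs].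
split; first by split.
rewrite /mH1 /mH1_u2 /mH1_s2 /mH1_v1 /mH1_t1.
have n1 : s * (v1 - u) - s * (v1 - u - (p - q)) != 0.
  by apply: (@nz_eq _ _ (s * (p - q))); [rewrite mulf_neq0 | ring].
have n2 : u * (s * t1 - 1) - (u * (s * t1 - 1) - (p - q)) != 0.
  by apply: (@nz_eq _ _ (p - q)); [ | ring].
split; fs.
Qed.

Lemma part5b (C : numClosedFieldType) (p q u s v t u2 s2 v1 t1 : C) :
     p != q -> mH1_nondeg u s v t -> mH1 p q u s v t u2 s2 v1 t1 ->
     Rc_def (u, s, p) (v1, t1, q) /\
     Rc (u, s, p) (v1, t1, q) = ((u2, s2, p), (v, t, q)).
Proof.
move=> hpq [hs ht hst huv] [-> -> -> ->].
rewrite /Rc_def /Rc /mH1_u2 /mH1_s2 /mH1_v1 /mH1_t1.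
have hd : p - q != 0 by rewrite subr_eq0.
have h1 : s * (s^-1 + (p - q) / (s * (u - v))) - 1 != 0.
  by apply: (@nz_eq _ _ ((p - q) / (u - v))); [rewrite mulf_neq0 // invr_eq0 | fs].
have h2 : u + s * ((p - q) / (s - t)) - u != 0.
  by apply: (@nz_eq _ _ (s * (p - q) / (s - t))); [rewrite !mulf_neq0 // invr_eq0 | fs].
have h3 : u + s * ((p - q) / (s - t)) - u - (p - q) != 0.
  by apply: (@nz_eq _ _ (t * (p - q) / (s - t))); [rewrite !mulf_neq0 // invr_eq0 | fs].
split; first by split.
have n1 : u - v + (p - q) + -1 * (u - v) != 0.
  by apply: (@nz_eq _ _ (p - q)); [ | ring].
have n2 : u * (s - t) + s * (p - q) + - u * (s - t) + - (p - q) * (s - t) != 0.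
  by apply: (@nz_eq _ _ (t * (p - q))); [rewrite mulf_neq0 | ring].
have n3 : u * (s - t) + s * (p - q) + - u * (s - t) != 0.
  by apply: (@nz_eq _ _ (s * (p - q))); [rewrite mulf_neq0 | ring].
congr ((_,_,_),(_,_,_)); fs.
Qed.

Lemma yb (C : numClosedFieldType) (w : pt C * pt C * pt C) :
     R23_def w -> R13_def (R23 w) -> R12_def (R13 (R23 w)) ->
     R12_def w -> R13_def (R12 w) -> R23_def (R13 (R12 w)) ->
     R12 (R13 (R23 w)) = R23 (R13 (R12 w)).
Proof.
case: w => [[[[x1 y1] p1] [[x2 y2] p2]] [[x3 y3] p3]].
rewrite /R12 /R13 /R23 /R12_def /R13_def /R23_def /Rc /Rc_def /=.
move=> [h1 h2 h3] [h4 h5 h6] [h7 h8 h9] [k1 k2 k3] [k4 k5 k6] [k7 k8 k9].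
have n2 : y2 * (x2 - x1) * y3 + -1 * (x2 - x1 - (p1 - p2)) != 0.
  apply: (@nz_of _ _ _ (x2 - x1 - (p1 - p2)) k4); first by rewrite ?mulf_neq0.
  by fs.
have n5 : x2 * (y2 * y3 - 1) - (p2 - p3) + - x1 * (y2 * y3 - 1) + - (p1 - p3) * (y2 * y3 - 1) != 0.
  apply: (@nz_of _ _ _ (y2 * y3 - 1) h6); first by rewrite ?mulf_neq0.
  by fs.
have n18 : x2 * (y2 * y3 - 1) - (p2 - p3) + - x1 * (y2 * y3 - 1) != 0.
  apply: (@nz_of _ _ _ (y2 * y3 - 1) h5); first by rewrite ?mulf_neq0.
  by fs.
have n7 : y2 * (x2 * (y2 * y3 - 1) - (p2 - p3) + - x1 * (y2 * y3 - 1)) * y3 + -1 * (x2 * (y2 * y3 - 1) - (p2 - p3) + - x1 * (y2 * y3 - 1) + - (p1 - p3) * (y2 * y3 - 1)) != 0.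
  apply: (@nz_of _ _ _ (x2 * (y2 * y3 - 1) - (p2 - p3) + - x1 * (y2 * y3 - 1) + - (p1 - p3) * (y2 * y3 - 1)) h7); first by rewrite ?mulf_neq0.
  by fs.
have n9 : x3 * (y1 * y2 - 1) - (x2 * (y1 * y2 - 1) - (p1 - p2) * (y1 * y2)) + - (p1 - p3) * (y1 * y2 - 1) != 0.
  apply: (@nz_of _ _ _ (y1 * y2 - 1) k6); first by rewrite ?mulf_neq0.
  by fs.
have n10 : y1 * (y2 * (x3 - x2 - (p2 - p3))) + -1 * (x3 - x2) != 0.
  apply: (@nz_of _ _ _ (x3 - x2) h4); first by rewrite ?mulf_neq0.
  by fs.
have n11 : (x3 * (y2 * y3 - 1) - (p2 - p3) * (y2 * y3)) * (y1 * (y2 * (x3 - x2 - (p2 - p3))) + -1 * (x3 - x2)) - ((x2 * (y2 * y3 - 1) - (p2 - p3)) * (y1 * (y2 * (x3 - x2 - (p2 - p3))) + -1 * (x3 - x2)) + - ((p1 - p3) * (y1 * (y2 * (x3 - x2 - (p2 - p3))))) * (y2 * y3 - 1)) + - (p1 - p2) * ((y1 * (y2 * (x3 - x2 - (p2 - p3))) + -1 * (x3 - x2)) * (y2 * y3 - 1)) != 0.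
  apply: (@nz_of _ _ _ ((y2 * y3 - 1) * (y1 * (y2 * (x3 - x2 - (p2 - p3))) + -1 * (x3 - x2))) h9); first by rewrite ?mulf_neq0.
  by fs.
have n12 : x3 * (y1 * y2 - 1) - (x2 * (y1 * y2 - 1) - (p1 - p2) * (y1 * y2)) != 0.
  apply: (@nz_of _ _ _ (y1 * y2 - 1) k5); first by rewrite ?mulf_neq0.
  by fs.
have n14 : y1 * (y2 * (x3 * (y1 * y2 - 1) - (x2 * (y1 * y2 - 1) - (p1 - p2) * (y1 * y2)) + - (p1 - p3) * (y1 * y2 - 1))) + -1 * (x3 * (y1 * y2 - 1) - (x2 * (y1 * y2 - 1) - (p1 - p2) * (y1 * y2))) != 0.
  apply: (@nz_of _ _ _ (x3 * (y1 * y2 - 1) - (x2 * (y1 * y2 - 1) - (p1 - p2) * (y1 * y2))) k7); first by rewrite ?mulf_neq0.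
  by fs.
have n15 : (x2 * (y1 * y2 - 1) - (p1 - p2) * (y1 * y2)) * (y2 * (x2 - x1) * y3 + -1 * (x2 - x1 - (p1 - p2))) + - ((p1 - p3) * (x2 - x1 - (p1 - p2))) * (y1 * y2 - 1) + - (x1 * (y1 * y2 - 1) - (p1 - p2)) * (y2 * (x2 - x1) * y3 + -1 * (x2 - x1 - (p1 - p2))) + - (p2 - p3) * ((y2 * (x2 - x1) * y3 + -1 * (x2 - x1 - (p1 - p2))) * (y1 * y2 - 1)) != 0.
  apply: (@nz_of _ _ _ ((y1 * y2 - 1) * (y2 * (x2 - x1) * y3 + -1 * (x2 - x1 - (p1 - p2)))) k9); first by rewrite ?mulf_neq0.
  by fs.
have n16 : (x3 * (y2 * y3 - 1) - (p2 - p3) * (y2 * y3)) * (y1 * (y2 * (x3 - x2 - (p2 - p3))) + -1 * (x3 - x2)) - ((x2 * (y2 * y3 - 1) - (p2 - p3)) * (y1 * (y2 * (x3 - x2 - (p2 - p3))) + -1 * (x3 - x2)) + - ((p1 - p3) * (y1 * (y2 * (x3 - x2 - (p2 - p3))))) * (y2 * y3 - 1)) != 0.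
  apply: (@nz_of _ _ _ ((y2 * y3 - 1) * (y1 * (y2 * (x3 - x2 - (p2 - p3))) + -1 * (x3 - x2))) h8); first by rewrite ?mulf_neq0.
  by fs.
have n17 : (x2 * (y1 * y2 - 1) - (p1 - p2) * (y1 * y2)) * (y2 * (x2 - x1) * y3 + -1 * (x2 - x1 - (p1 - p2))) + - ((p1 - p3) * (x2 - x1 - (p1 - p2))) * (y1 * y2 - 1) + - (x1 * (y1 * y2 - 1) - (p1 - p2)) * (y2 * (x2 - x1) * y3 + -1 * (x2 - x1 - (p1 - p2))) != 0.
  apply: (@nz_of _ _ _ ((y1 * y2 - 1) * (y2 * (x2 - x1) * y3 + -1 * (x2 - x1 - (p1 - p2)))) k8); first by rewrite ?mulf_neq0.
  by fs.
congr ((_,_,_),(_,_,_),(_,_,_)); fs.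
Qed.

Theorem proposition3p1 (C : numClosedFieldType) :
  (* (1) *)
  (forall p q u s v t u2 s2 v1 t1 : C,
     mH1_nondeg u s v t -> mH1 p q u s v t u2 s2 v1 t1 -> t1 != 0 ->
     s2 / t1 = s / t /\
     u2 - v1 + (p - q) / 2%:R = - (u - v + (p - q) / 2%:R)) /\
  (* (2) *)
  (forall p q u s v t u2 s2 v1 t1 : C,
     mH1_nondeg u s v t -> mH1 p q u s v t u2 s2 v1 t1 -> t1 != 0 ->
     (t * u = s * v <-> u2 * s2 = t1 * v1)) /\
  (* (3) the multi-component system (with n = 2 it is (mH1)) *)
  (forall p q u s v t : C,
     let P := [ffun i : 'I_2 => if i == ord0 then p else q] in
     let X := [ffun i : 'I_2 => if i == ord0 then u else v] in
     let Y := [ffun i : 'I_2 => if i == ord0 then s else t] in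
     mH1 p q u s v t (Xstep P X Y ord0 ord_max) (Ystep P X Y ord0 ord_max)
                     (Xstep P X Y ord_max ord0) (Ystep P X Y ord_max ord0)) /\
  (forall (n : nat) (P X Y : 'I_n -> C) (i j k : 'I_n),
     i != j -> j != k -> i != k ->
     step_ok X Y i k -> step_ok X Y j k ->
     step_ok (shiftX P X Y k) (shiftY P X Y k) i j ->
     step_ok X Y i j -> step_ok X Y k j ->
     step_ok (shiftX P X Y j) (shiftY P X Y j) i k ->
     Xstep P (shiftX P X Y k) (shiftY P X Y k) i j
       = Xstep P (shiftX P X Y j) (shiftY P X Y j) i k /\
     Ystep P (shiftX P X Y k) (shiftY P X Y k) i j
       = Ystep P (shiftX P X Y j) (shiftY P X Y j) i k) /\
  (* (4) *)
  (forall p q u s v t u2 s2 v1 t1 : C,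
     mH1_nondeg u s v t ->
     ((forall lam : C,
         Lmat u2 s2 p lam *m Lmat v t q lam = Lmat v1 t1 q lam *m Lmat u s p lam)
      <-> mH1 p q u s v t u2 s2 v1 t1)) /\
  (* (5) the companion map Rc solves (mH1) for (u2,s2,v,t) ... *)
  (forall p q u s v1 t1 : C,
     p != q -> s != 0 -> Rc_def (u, s, p) (v1, t1, q) ->
     let: ((u2, s2, _), (v, t, _)) := Rc (u, s, p) (v1, t1, q) in
     mH1_nondeg u s v t /\ mH1 p q u s v t u2 s2 v1 t1) /\
  (forall p q u s v t u2 s2 v1 t1 : C,
     p != q -> mH1_nondeg u s v t -> mH1 p q u s v t u2 s2 v1 t1 ->
     Rc_def (u, s, p) (v1, t1, q) /\
     Rc (u, s, p) (v1, t1, q) = ((u2, s2, p), (v, t, q))) /\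
  (* ... and is a Yang-Baxter map *)
  (forall w : pt C * pt C * pt C,
     R23_def w -> R13_def (R23 w) -> R12_def (R13 (R23 w)) ->
     R12_def w -> R13_def (R12 w) -> R23_def (R13 (R12 w)) ->
     R12 (R13 (R23 w)) = R23 (R13 (R12 w))).
Proof.
split; first exact: part1.
split; first exact: part2.
split; first exact: part3a.
split; first exact: part3b.
split; first exact: part4.
split; first exact: part5a.
split; first exact: part5b.
exact: yb.
Qed.
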